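(* Let $\sigma\in(\tfrac12,1)$ be fixed. There is a constant $B=B(\sigma)>0$ such that for every prime $p$ and every real $k>0$: (i) $\displaystyle\sum_{\nu\ge0}\frac{d_{k/2}(p^\nu)^2}{p^{2\nu\sigma}}=I_0\Big(\frac{k}{p^\sigma}\Big)\exp\Big\{E_1\Big\}$ with $|E_1|\le B\,k/p^{2\sigma}$; (ii) if moreover $p\le k^{1/\sigma}$, then $\displaystyle\sum_{\nu\ge0}\frac{d_{k/2}(p^\nu)^2}{p^{2\nu\sigma}}=\exp\{E_2\}$ with $|E_2|\le B\,k/p^{\sigma}$.
   Context: For real $z>0$, $d_z(n)$ is the generalized divisor function, defined by $\zeta(s)^z=\sum_{n\ge1}d_z(n)n^{-s}$ ($\Re s>1$); it is multiplicative with $d_z(p^\nu)=\frac{\Gamma(z+\nu)}{\Gamma(z)\,\nu!}$. $I_0(t):=\int_0^1\exp(t\cos(2\pi\theta))\,d\theta=\sum_{n\ge0}\frac{(t/2)^{2n}}{(n!)^2}$ is the modified Bessel function of order $0$. *)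

(* Defs.v *)
From Stdlib Require Import Reals ZArith Znumtheory.
From Coquelicot Require Import Coquelicot.
Open Scope R_scope.

(* rising factorial z (z+1) ... (z+n-1) = Gamma(z+n)/Gamma(z) *)
Fixpoint rising (z : R) (n : nat) : R :=
  match n with
  | O => 1
  | S m => rising z m * (z + INR m)
  end.

(* d_z(p^nu) = Gamma(z+nu) / (Gamma(z) nu!) *)
Definition dz_pow (z : R) (nu : nat) : R := rising z nu / INR (fact nu).

Definition I0 (t : R) : R :=
  Series (fun n => (t / 2) ^ (2 * n) / (INR (fact n)) ^ 2).

(* Main.v *)
Require Import Defs.
From Stdlib Require Import Reals ZArith Znumtheory.
From Coquelicot Require Import Coquelicot.
From Stdlib Require Import Arith Lia Lra.
Open Scope R_scope.


Fixpoint st (u lam : R) (n : nat) : R * R :=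
  match n with
  | O => (0, 1)
  | S m => let (a, b) := st u lam m in (b, u * b + lam * a / INR (S m))
  end.
Definition Vp u lam n := fst (st u lam n).
Definition V u lam n := snd (st u lam n).
Definition bet u lam n := V u lam n - u * Vp u lam n.

Lemma Vp0 u lam : Vp u lam 0 = 0. Proof. reflexivity. Qed.
Lemma V0 u lam : V u lam 0 = 1. Proof. reflexivity. Qed.
Lemma VpS u lam n : Vp u lam (S n) = V u lam n.
Proof. unfold Vp, V; simpl; destruct (st u lam n); reflexivity. Qed.
Lemma VS u lam n : V u lam (S n) = u * V u lam n + lam * Vp u lam n / INR (S n).
Proof. unfold Vp, V; simpl; destruct (st u lam n); reflexivity. Qed.
Lemma bet0 u lam : bet u lam 0 = 1.
Proof. unfold bet; rewrite Vp0, V0; ring. Qed.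
Lemma betS u lam n : bet u lam (S n) = lam * Vp u lam n / INR (S n).
Proof. unfold bet; rewrite VS, VpS; ring. Qed.
Lemma betS' u lam n : bet u lam (S n) * INR (S n) = lam * Vp u lam n.
Proof. rewrite betS; field. apply not_0_INR; lia. Qed.

Lemma V_nonneg u lam : 0 <= u -> 0 <= lam -> forall n, 0 <= Vp u lam n /\ 0 <= V u lam n.
Proof.
  intros hu hl n; induction n as [|n IH].
  - rewrite Vp0, V0; lra.
  - rewrite VpS, VS; destruct IH; split; [lra|].
    apply Rplus_le_le_0_compat; [apply Rmult_le_pos; lra|].
    unfold Rdiv; apply Rmult_le_pos; [apply Rmult_le_pos; lra|].
    apply Rlt_le, Rinv_0_lt_compat, lt_0_INR; lia.
Qed.
Lemma bet_nonneg u lam : 0 <= u -> 0 <= lam -> forall n, 0 <= bet u lam n.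
Proof.
  intros hu hl [|n]; [rewrite bet0; lra|]. rewrite betS.
  destruct (V_nonneg u lam hu hl n).
  unfold Rdiv; apply Rmult_le_pos; [apply Rmult_le_pos; lra|].
  apply Rlt_le, Rinv_0_lt_compat, lt_0_INR; lia.
Qed.

Definition xs (t : R) (m : nat) := t ^ m / INR (fact m).
Definition conv (a b : nat -> R) (n : nat) := sum_f_R0 (fun m => a m * b (n - m)%nat) n.

Lemma xsS t m : xs t (S m) * INR (S m) = t * xs t m.
Proof. unfold xs. rewrite fact_simpl, mult_INR. simpl pow. field.
  split; apply not_0_INR; [apply fact_neq_0| lia]. Qed.

Lemma F1 t u lam n : conv (xs t) (Vp u lam) (S n) = conv (xs t) (V u lam) n.
Proof.
  unfold conv; rewrite tech5. rewrite Nat.sub_diag, Vp0, Rmult_0_r, Rplus_0_r.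
  apply sum_eq; intros i hi. replace (S n - i)%nat with (S (n - i)) by lia.
  now rewrite VpS.
Qed.

Lemma F2 t u lam n : conv (xs t) (V u lam) n = u * conv (xs t) (Vp u lam) n + conv (xs t) (bet u lam) n.
Proof.
  unfold conv; rewrite scal_sum, <- plus_sum. apply sum_eq; intros i hi.
  unfold bet; ring.
Qed.

Lemma F3 t u lam n : INR (S n) * conv (xs t) (bet u lam) (S n)
   = t * conv (xs t) (bet u lam) n + lam * conv (xs t) (Vp u lam) n.
Proof.
  unfold conv; rewrite !scal_sum.
  transitivity (sum_f_R0 (fun m => xs t m * INR m * bet u lam (S n - m)) (S n)
     + sum_f_R0 (fun m => xs t m * (bet u lam (S n - m) * INR (S n - m))) (S n)).
  { rewrite <- plus_sum; apply sum_eq; intros i hi.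
    replace (INR (S n)) with (INR i + INR (S n - i)) by (rewrite <- plus_INR; f_equal; lia). ring. }
  f_equal.
  - rewrite decomp_sum by lia. simpl pred. rewrite Rmult_0_r, Rmult_0_l, Rplus_0_l.
    apply sum_eq; intros i hi. rewrite xsS. simpl (S n - S i)%nat. ring.
  - rewrite tech5. rewrite Nat.sub_diag, Rmult_0_r, Rmult_0_r, Rplus_0_r.
    apply sum_eq; intros i hi. replace (S n - i)%nat with (S (n - i)) by lia.
    rewrite betS'. ring.
Qed.

Lemma delta_rec t u lam n : lam = t * u ->
  INR (S n) * conv (xs t) (bet u lam) (S n) = (t + INR n * u) * conv (xs t) (bet u lam) n.
Proof.
  intros hl. destruct n as [|n].
  - rewrite F3. unfold conv at 2; simpl. rewrite Vp0. ring.
  - rewrite F3, F1, F2. pose proof (F3 t u lam n) as h.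
    rewrite hl in *.
    set (a := conv (xs t) (bet u (t * u)) (S n)) in *.
    set (b := conv (xs t) (bet u (t * u)) n) in *.
    set (c := conv (xs t) (Vp u (t * u)) n) in *.
    set (m := INR (S n)) in *.
    assert (h2 : u * (m * a) = u * (t * b + t * u * c)) by (rewrite h; reflexivity).
    nra.
Qed.

Definition gam z u n := dz_pow z n * u ^ n.

Lemma gamS z u n : INR (S n) * gam z u (S n) = (z * u + INR n * u) * gam z u n.
Proof.
  unfold gam, dz_pow. simpl rising. rewrite fact_simpl, mult_INR. simpl pow.
  field. split; apply not_0_INR; [apply fact_neq_0| lia].
Qed.

Lemma gam_eq z u n : gam z u n = conv (xs (z * u)) (bet u (z * u * u)) n.
Proof.
  induction n as [|n IH].
  - unfold gam, conv, dz_pow, xs; simpl. rewrite bet0. field.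
  - apply (Rmult_eq_reg_l (INR (S n))); [|apply not_0_INR; lia].
    rewrite gamS, delta_rec by reflexivity. now rewrite IH.
Qed.

Lemma sum_rev (f : nat -> R) N : sum_f_R0 (fun i => f (N - i)%nat) N = sum_f_R0 f N.
Proof.
  induction N as [|N IH]; [reflexivity|].
  rewrite decomp_sum by lia. simpl pred. rewrite Nat.sub_0_r, tech5.
  rewrite Rplus_comm. f_equal. rewrite <- IH. apply sum_eq; intros; reflexivity.
Qed.

Lemma CS (a b : nat -> R) N : (forall i, 0 <= b i) ->
  (sum_f_R0 (fun i => a i * b i) N) ^ 2 <=
  sum_f_R0 (fun i => a i ^ 2 * b i) N * sum_f_R0 b N.
Proof.
  intros hb. induction N as [|N IH].
  - simpl. specialize (hb 0%nat). nra.
  - rewrite !tech5.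
    set (A := sum_f_R0 (fun i => a i * b i) N) in *.
    set (C := sum_f_R0 (fun i => a i ^ 2 * b i) N) in *.
    set (B := sum_f_R0 b N) in *.
    assert (hB : 0 <= B) by (apply cond_pos_sum; auto).
    assert (hC : 0 <= C) by (apply cond_pos_sum; intros; specialize (hb n); nra).
    specialize (hb (S N)). set (x := a (S N)) in *. set (y := b (S N)) in *.
    assert (key : 2 * x * A <= x ^ 2 * B + C).
    { destruct (Req_dec B 0) as [h0|h0].
      - assert (A = 0).
        { rewrite h0 in IH. destruct (Req_dec A 0) as [|hA]; [auto|].
          exfalso. pose proof (Rsqr_pos_lt A hA). unfold Rsqr in *. nra. }
        rewrite H, h0. lra.
      - assert (0 < B) by (destruct hB as [hB'|hB']; [exact hB'| symmetry in hB'; contradiction]).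
        assert (0 <= (x * B - A) ^ 2) by apply pow2_ge_0.
        assert (A ^ 2 <= B * C) by nra.
        apply (Rmult_le_reg_l B); [lra|]. nra. }
    nra.
Qed.

Lemma pos_series (a : nat -> R) M : (forall n, 0 <= a n) -> (forall N, sum_f_R0 a N <= M) ->
  is_series a (Series a) /\ (forall N, sum_f_R0 a N <= Series a) /\ Series a <= M.
Proof.
  intros ha hM.
  assert (inc : forall n, sum_n a n <= sum_n a (S n)).
  { intros n; rewrite !sum_n_Reals, tech5. specialize (ha (S n)); lra. }
  destruct (ex_finite_lim_seq_incr (sum_n a) M inc) as [l Hl].
  { intros n; rewrite sum_n_Reals; auto. }
  assert (Hs : is_series a l) by exact Hl.
  rewrite (is_series_unique a l Hs). split; [exact Hs|]. split.
  - intros N. rewrite <- sum_n_Reals. exact (is_lim_seq_incr_compare _ l Hl inc N).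
  - assert (h := is_lim_seq_le (sum_n a) (fun _ => M) l M).
    simpl in h. apply h; [intros n; rewrite sum_n_Reals; auto| exact Hl| apply is_lim_seq_const].
Qed.

Section G.
Variables (u lam : R).
Hypotheses (hu0 : 0 <= u) (hu1 : u < 1) (hl : 0 <= lam).

Definition GG M x := sum_f_R0 (fun j => bet u lam j * x ^ j) M.
Definition AA M x := sum_f_R0 (fun j => V u lam j * x ^ j) M.
Definition QQ M x := sum_f_R0 (fun j => Vp u lam j * x ^ j) M.

Lemma AGQ M x : AA M x = GG M x + u * QQ M x.
Proof. unfold AA, GG, QQ; rewrite scal_sum, <- plus_sum; apply sum_eq; intros; unfold bet; ring. Qed.

Lemma QS M x : QQ (S M) x = x * AA M x.
Proof.
  unfold QQ, AA. rewrite decomp_sum by lia. simpl pred. rewrite Vp0, Rmult_0_l, Rplus_0_l.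
  rewrite scal_sum. apply sum_eq; intros i _. rewrite VpS. simpl. ring.
Qed.

Lemma GG_nonneg M x : 0 <= x -> 0 <= GG M x.
Proof. intros hx; apply cond_pos_sum; intros n; apply Rmult_le_pos; [apply bet_nonneg; auto| apply pow_le; auto]. Qed.
Lemma GG_mono M x : 0 <= x -> GG M x <= GG (S M) x.
Proof. intros hx; unfold GG; rewrite tech5.
  assert (0 <= bet u lam (S M) * x ^ S M) by (apply Rmult_le_pos; [apply bet_nonneg; auto| apply pow_le; auto]). lra. Qed.

Lemma AA_bound M x : 0 <= x <= 1 -> AA M x * (1 - u * x) <= GG M x.
Proof.
  intros hx. induction M as [|M IH].
  - unfold AA, GG; simpl. rewrite V0, bet0. nra.
  - assert (e : AA (S M) x = GG (S M) x + u * x * AA M x) by (rewrite AGQ, QS; ring).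
    rewrite e. pose proof (GG_mono M x ltac:(lra)).
    assert (0 <= u * x) by nra. assert (u * x < 1) by nra.
    assert (0 <= GG (S M) x) by (apply GG_nonneg; lra). nra.
Qed.

Lemma QQ_mono M x : 0 <= x -> QQ M x <= QQ (S M) x.
Proof. intros hx; unfold QQ; rewrite tech5.
  assert (0 <= Vp u lam (S M) * x ^ S M) by (apply Rmult_le_pos; [apply V_nonneg; auto| apply pow_le; auto]). lra. Qed.

Definition Lam := lam / (1 - u).

Lemma deriv_bound M x : 0 <= x <= 1 ->
  sum_f_R0 (fun k => INR (S k) * bet u lam (S k) * x ^ k) M <= Lam * x * GG (S M) x.
Proof.
  intros hx.
  assert (e : sum_f_R0 (fun k => INR (S k) * bet u lam (S k) * x ^ k) M = lam * QQ M x).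
  { unfold QQ; rewrite scal_sum; apply sum_eq; intros i _.
    replace (Vp u lam i * x ^ i * lam) with (lam * Vp u lam i * x ^ i) by ring.
    rewrite <- (betS' u lam i). ring. }
  rewrite e. pose proof (QQ_mono M x ltac:(lra)). rewrite QS in H.
  pose proof (AA_bound M x hx). pose proof (GG_mono M x ltac:(lra)).
  assert (0 <= GG M x) by (apply GG_nonneg; lra).
  assert (hux : 1 - u <= 1 - u * x) by nra.
  assert (AA M x * (1 - u) <= GG (S M) x) by nra.
  assert (0 <= AA M x).
  { apply cond_pos_sum; intros n; apply Rmult_le_pos; [apply V_nonneg; auto| apply pow_le; lra]. }
  unfold Lam. apply Rle_trans with (lam * (x * AA M x)).
  { apply Rmult_le_compat_l; auto. }
  assert (AA M x <= GG (S M) x / (1 - u)).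
  { apply (Rmult_le_reg_r (1 - u)); [lra|]. unfold Rdiv. rewrite Rmult_assoc, Rinv_l; lra. }
  replace (lam / (1 - u) * x * GG (S M) x) with (lam * (x * (GG (S M) x / (1 - u)))) by (field; lra).
  apply Rmult_le_compat_l; auto. apply Rmult_le_compat_l; lra.
Qed.

Lemma GG_bound M : GG (S M) 1 <= exp (Lam / 2).
Proof.
  set (H := fun x => GG (S M) x * exp (- (Lam * x ^ 2 / 2))).
  set (dG := fun x => sum_f_R0 (fun k => INR (S k) * bet u lam (S k) * x ^ k) M).
  set (H' := fun x => dG x * exp (- (Lam * x ^ 2 / 2)) + GG (S M) x * (exp (- (Lam * x ^ 2 / 2)) * (- (Lam * x)))).
  destruct (MVT_cor3 H H' 0 1 Rlt_0_1) as [c [hc0 [hc1 hc]]].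
  { intros x _ _. apply is_derive_Reals.
    assert (hG : is_derive (GG (S M)) x (dG x)).
    { apply is_derive_Reals. exact (derivable_pt_lim_finite_sum (bet u lam) x (S M)). }
    assert (hE : is_derive (fun x => exp (- (Lam * x ^ 2 / 2))) x (exp (- (Lam * x ^ 2 / 2)) * (- (Lam * x)))).
    { auto_derive; [auto|]. replace (- (Lam * (x * (x * 1)) * / 2)) with (- (Lam * x ^ 2 / 2)) by field. field. }
    exact (is_derive_mult _ _ _ _ _ hG hE Rmult_comm). }
  assert (hLam : 0 <= Lam) by (unfold Lam; apply Rmult_le_pos; [auto| apply Rlt_le, Rinv_0_lt_compat; lra]).
  assert (hH' : H' c <= 0).
  { unfold H'. pose proof (deriv_bound M c (conj hc0 hc1)) as hd. fold (dG c) in hd.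
    pose proof (exp_pos (- (Lam * c ^ 2 / 2))) as he.
    set (e := exp (- (Lam * c ^ 2 / 2))) in *.
    replace (dG c * e + GG (S M) c * (e * - (Lam * c))) with (e * (dG c - Lam * c * GG (S M) c)) by ring.
    assert (dG c - Lam * c * GG (S M) c <= 0) by lra. nra. }
  assert (H0 : H 0 = 1).
  { unfold H, GG. rewrite decomp_sum by lia. simpl pred. rewrite bet0.
    rewrite sum_eq_R0. { simpl. replace (- (Lam * (0 * (0 * 1)) / 2)) with 0 by lra. rewrite exp_0. ring. }
    intros; simpl; ring. }
  assert (H 1 <= 1) by (rewrite hc, H0; nra).
  unfold H in H1. replace (1 ^ 2) with 1 in H1 by ring.
  pose proof (exp_pos (- (Lam * 1 / 2))).
  assert (hE : exp (Lam/2) * exp (-(Lam*1/2)) = 1).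
  { rewrite <- exp_plus. replace (Lam / 2 + - (Lam * 1 / 2)) with 0 by lra. apply exp_0. }
  pose proof (exp_pos (Lam/2)). nra.
Qed.

Lemma bet_sum_bound N : sum_f_R0 (bet u lam) N <= exp (Lam / 2).
Proof.
  eapply Rle_trans; [|apply (GG_bound N)].
  replace (sum_f_R0 (bet u lam) N) with (GG N 1).
  - apply GG_mono; lra.
  - unfold GG; apply sum_eq; intros; rewrite pow1; ring.
Qed.
End G.

Lemma conv_prod (A0 B0 : nat -> R) N : (forall n, 0 <= A0 n) -> (forall n, 0 <= B0 n) ->
  sum_f_R0 (fun k => sum_f_R0 (fun p => A0 p * B0 (k - p)%nat) k) N <= sum_f_R0 A0 N * sum_f_R0 B0 N.
Proof.
  intros ha hb. destruct N as [|N].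
  - simpl. lra.
  - rewrite cauchy_finite by lia.
    assert (0 <= sum_f_R0 (fun k => sum_f_R0 (fun l => A0 (S (l + k)) * B0 (S N - l)%nat) (pred (S N - k))) (pred (S N))).
    { apply cond_pos_sum; intros; apply cond_pos_sum; intros; apply Rmult_le_pos; auto. }
    lra.
Qed.

Lemma sq_sum (a : nat -> R) N : (forall n, 0 <= a n) -> sum_f_R0 (fun n => a n ^ 2) N <= (sum_f_R0 a N) ^ 2.
Proof.
  intros ha; induction N as [|N IH]; [simpl; nra|]. rewrite !tech5.
  assert (0 <= sum_f_R0 a N) by (apply cond_pos_sum; auto). specialize (ha (S N)). nra.
Qed.

Lemma rising_ge z n : 0 < z -> z ^ n <= rising z n.
Proof.
  intros hz; induction n as [|n IH]; simpl; [lra|].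
  pose proof (pos_INR n). pose proof (pow_le z n (Rlt_le _ _ hz)). nra.
Qed.

Lemma xs_nonneg t n : 0 <= t -> 0 <= xs t n.
Proof. intros ht; unfold xs; apply Rmult_le_pos; [apply pow_le; auto| apply Rlt_le, Rinv_0_lt_compat, lt_0_INR, lt_O_fact]. Qed.

Lemma exp_le' x y : x <= y -> exp x <= exp y.
Proof. intros [h|h]; [left; apply exp_increasing; auto| subst; lra]. Qed.
Lemma ln_le' x y : 0 < x -> x <= y -> ln x <= ln y.
Proof. intros hx [h|h]; [left; apply ln_increasing; auto| subst; lra]. Qed.

Lemma core z u : 0 < z -> 0 < u <= 3/4 ->
  let a := fun n => gam z u n ^ 2 in
  let b := fun n => xs (z*u) n ^ 2 in
  is_series a (Series a) /\ is_series b (Series b) /\ 1 <= Series b /\ Series b <= Series a /\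
  Series a <= exp (4*z*u^2) * Series b /\ Series b <= exp (2*z*u).
Proof.
  intros hz hu a b.
  set (t := z * u). set (lam := z * u * u).
  assert (ht : 0 <= t) by (unfold t; nra).
  assert (hl : 0 <= lam) by (unfold lam; nra).
  assert (hb0 : forall n, 0 <= b n) by (intros; unfold b; apply pow2_ge_0).
  assert (ha0 : forall n, 0 <= a n) by (intros; unfold a; apply pow2_ge_0).
  assert (hbB : forall N, sum_f_R0 b N <= exp (2 * z * u)).
  { intros N. eapply Rle_trans; [apply sq_sum; intros; apply xs_nonneg; auto|].
    replace (exp (2 * z * u)) with (exp t ^ 2) by (simpl; rewrite Rmult_1_r, <- exp_plus; unfold t; f_equal; ring).
    apply pow_incr. split; [apply cond_pos_sum; intros; apply xs_nonneg; auto|].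
    apply exp_ge_taylor; auto. }
  destruct (pos_series b _ hb0 hbB) as [hbS [hbP hbM]].
  assert (hu1 : 0 <= u) by lra. assert (hu2 : u < 1) by lra.
  set (P := exp (Lam u lam / 2)).
  assert (hP : forall N, sum_f_R0 (bet u lam) N <= P) by (intros; apply bet_sum_bound; auto).
  assert (hP0 : 0 <= P) by (apply Rlt_le, exp_pos).
  assert (han : forall n, a n <= P * conv (fun i => xs t i ^ 2) (bet u lam) n).
  { intros n. unfold a. rewrite gam_eq. fold t lam. unfold conv.
    eapply Rle_trans; [apply (CS (xs t) (fun i => bet u lam (n - i)%nat)); intros; apply bet_nonneg; auto|].
    rewrite (sum_rev (bet u lam)). rewrite Rmult_comm. apply Rmult_le_compat_r; auto.
    apply cond_pos_sum; intros; apply Rmult_le_pos; [apply pow2_ge_0| apply bet_nonneg; auto]. }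
  assert (haN : forall N, sum_f_R0 a N <= P ^ 2 * Series b).
  { intros N. apply Rle_trans with (sum_f_R0 (fun n => P * conv (fun i => xs t i ^ 2) (bet u lam) n) N).
    { apply sum_Rle; intros; auto. }
    replace (sum_f_R0 (fun n => P * conv (fun i => xs t i ^ 2) (bet u lam) n) N)
      with (P * sum_f_R0 (fun n => conv (fun i => xs t i ^ 2) (bet u lam) n) N)
      by (rewrite scal_sum; apply sum_eq; intros; ring).
    unfold conv.
    eapply Rle_trans. { apply Rmult_le_compat_l; auto. apply conv_prod; [intros; apply pow2_ge_0| intros; apply bet_nonneg; auto]. }
    assert (0 <= sum_f_R0 (fun i => xs t i ^ 2) N) by (apply cond_pos_sum; intros; apply pow2_ge_0).
    specialize (hP N). specialize (hbP N).
    assert (0 <= sum_f_R0 (bet u lam) N) by (apply cond_pos_sum; intros; apply bet_nonneg; auto).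
    assert (0 <= Series b) by (apply Rle_trans with (sum_f_R0 b N); [apply cond_pos_sum; auto| auto]).
    replace (P ^ 2 * Series b) with (P * (Series b * P)) by ring.
    apply Rmult_le_compat_l; auto. apply Rmult_le_compat; auto. }
  destruct (pos_series a _ ha0 haN) as [haS [haP haM]].
  assert (hba : forall n, b n <= a n).
  { intros n. unfold a, b, gam, xs, dz_pow. apply pow_incr. split; [apply xs_nonneg; auto|].
    unfold t. rewrite Rpow_mult_distr. unfold Rdiv.
    replace (z ^ n * u ^ n * / INR (fact n)) with (z ^ n * (/ INR (fact n) * u ^ n)) by ring.
    replace (rising z n * / INR (fact n) * u ^ n) with (rising z n * (/ INR (fact n) * u ^ n)) by ring.
    apply Rmult_le_compat_r.
    { apply Rmult_le_pos; [apply Rlt_le, Rinv_0_lt_compat, lt_0_INR, lt_O_fact| apply pow_le; auto]. }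
    apply rising_ge; auto. }
  destruct (pos_series b (Series a) hb0) as [_ [_ hba']].
  { intros N. eapply Rle_trans; [|apply haP]. apply sum_Rle; intros; auto. }
  split; [exact haS|]. split; [exact hbS|]. split.
  { specialize (hbP 0%nat). change (sum_f_R0 b 0) with (b 0%nat) in hbP. replace (b 0%nat) with 1 in hbP by (unfold b, xs; simpl; field). exact hbP. }
  split; [exact hba'|]. split; [|exact hbM].
  eapply Rle_trans; [exact haM|]. apply Rmult_le_compat_r; [apply Rle_trans with (sum_f_R0 b 0); [apply cond_pos_sum; auto| auto]|].
  replace (P ^ 2) with (exp (Lam u lam)).
  2:{ unfold P. simpl. rewrite Rmult_1_r, <- exp_plus. f_equal. field. }
 apply exp_le'. unfold Lam, lam.
  apply (Rmult_le_reg_r (1 - u)); [lra|]. unfold Rdiv. rewrite Rmult_assoc, Rinv_l by lra.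
  assert (0 <= z * u * u) by nra. nra.
Qed.

Theorem lemma2p1 (sigma : R) (hs1 : 1/2 < sigma) (hs2 : sigma < 1) :
  exists B : R, 0 < B /\
  forall (p : nat) (k : R), prime (Z.of_nat p) -> 0 < k ->
    (exists E1 : R,
       is_series (fun nu : nat => (dz_pow (k/2) nu) ^ 2 / Rpower (INR p) (2 * INR nu * sigma))
                 (I0 (k / Rpower (INR p) sigma) * exp E1)
       /\ Rabs E1 <= B * k / Rpower (INR p) (2 * sigma))
    /\
    (INR p <= Rpower k (1 / sigma) ->
     exists E2 : R,
       is_series (fun nu : nat => (dz_pow (k/2) nu) ^ 2 / Rpower (INR p) (2 * INR nu * sigma))
                 (exp E2)
       /\ Rabs E2 <= B * k / Rpower (INR p) sigma).
Proof.
  exists 3. split; [lra|]. intros p k hp hk.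
  assert (hp2 : (2 <= p)%nat) by (pose proof (prime_ge_2 _ hp); lia).
  assert (hpR : 2 <= INR p) by (apply le_INR in hp2; simpl in hp2; lra).
  set (P := Rpower (INR p) sigma).
  assert (hP0 : 0 < P) by (unfold P, Rpower; apply exp_pos).
  assert (hP2 : Rpower (INR p) (2 * sigma) = P ^ 2).
  { unfold P. rewrite <- Rpower_pow by (unfold Rpower; apply exp_pos). rewrite Rpower_mult.
    f_equal. simpl. ring. }
  assert (hPP : 2 <= P ^ 2).
  { rewrite <- hP2. apply Rle_trans with (Rpower (INR p) 1).
    - rewrite Rpower_1; lra.
    - apply Rle_Rpower; lra. }
  assert (hP43 : 4/3 <= P) by nra.
  set (u := / P). set (z := k / 2).
  assert (hu : 0 < u <= 3/4).
  { unfold u; split; [apply Rinv_0_lt_compat; auto|].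
    apply (Rmult_le_reg_l P); auto. rewrite Rinv_r by lra. lra. }
  assert (hz : 0 < z) by (unfold z; lra).
  destruct (core z u hz hu) as [haS [hbS [hb1 [hba [hab hbe]]]]].
  set (Sa := Series (fun n => gam z u n ^ 2)) in *.
  set (Sb := Series (fun n => xs (z * u) n ^ 2)) in *.
  assert (hterm : forall nu, dz_pow (k/2) nu ^ 2 / Rpower (INR p) (2 * INR nu * sigma) = gam z u nu ^ 2).
  { intros nu. replace (Rpower (INR p) (2 * INR nu * sigma)) with (P ^ (nu * 2)).
    - unfold gam, u, z. rewrite pow_mult, pow_inv. field. apply pow_nonzero; lra.
    - unfold P. rewrite <- Rpower_pow by (unfold Rpower; apply exp_pos). rewrite Rpower_mult.
      f_equal. rewrite mult_INR. simpl. ring. }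
  assert (hI : I0 (k / P) = Sb).
  { unfold I0, Sb. apply Series_ext. intros n. unfold xs.
    replace (k / P / 2) with (z * u) by (unfold z, u; field; lra).
    rewrite Nat.mul_comm, pow_mult. field. apply not_0_INR, fact_neq_0. }
  assert (hSer : is_series (fun nu => dz_pow (k/2) nu ^ 2 / Rpower (INR p) (2 * INR nu * sigma)) Sa).
  { eapply is_series_ext; [|exact haS]. intros n. symmetry; apply hterm. }
  assert (hSb0 : 0 < Sb) by lra.
  assert (hSa0 : 0 < Sa) by lra.
  split.
  - exists (ln (Sa / Sb)). split.
    + fold P. rewrite hI, exp_ln by (apply Rdiv_lt_0_compat; auto).
      replace (Sb * (Sa / Sb)) with Sa by (field; lra). exact hSer.
    + assert (h1 : 1 <= Sa / Sb) by (apply (Rmult_le_reg_r Sb); auto; unfold Rdiv; rewrite Rmult_assoc, Rinv_l; lra).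
      assert (h0 : 0 <= ln (Sa / Sb)) by (rewrite <- ln_1; apply ln_le'; lra).
      rewrite Rabs_pos_eq by auto. fold P. rewrite hP2.
      assert (hE : Sa / Sb <= exp (4 * z * u ^ 2)).
      { apply (Rmult_le_reg_r Sb); auto. unfold Rdiv; rewrite Rmult_assoc, Rinv_l; lra. }
      apply ln_le' in hE; [|lra]. rewrite ln_exp in hE.
      eapply Rle_trans; [exact hE|]. unfold z, u.
      replace (4 * (k / 2) * (/ P) ^ 2) with (2 * k / P ^ 2) by (field; lra).
      unfold Rdiv. apply Rmult_le_compat_r; [apply Rlt_le, Rinv_0_lt_compat; nra| lra].
  - intros _. exists (ln Sa). split.
    + rewrite exp_ln by auto. exact hSer.
    + assert (h0 : 0 <= ln Sa) by (rewrite <- ln_1; apply ln_le'; lra).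
      rewrite Rabs_pos_eq by auto. fold P.
      assert (hE : Sa <= exp (4 * z * u ^ 2 + 2 * z * u)).
      { rewrite exp_plus. eapply Rle_trans; [exact hab|]. apply Rmult_le_compat_l; [apply Rlt_le, exp_pos| auto]. }
      apply ln_le' in hE; [|lra]. rewrite ln_exp in hE.
      eapply Rle_trans; [exact hE|].
      replace (3 * k / P) with (6 * z * u) by (unfold z, u; field; lra).
      assert (0 < z * u) by nra. nra.
Qed.
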